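(* Let $J$ be a Jordan algebra with unit element $1$ over a field $F$ of characteristic $\neq 2,3$, and let $d$ be a derivation with invertible values of $J$. If $I$ is an ideal of $J$ with $I \subseteq \ker(d)$, then $I^2 = 0$.
   Context: A Jordan algebra is a commutative algebra satisfying $(x^2,y,x)=0$, where $(a,b,c)=(ab)c-a(bc)$. In a Jordan algebra $J$ with unit $1$, an element $x$ is invertible if there exists $y \in J$ with $xy = 1$ and $x^2 y = x$. A derivation with invertible values of $J$ is a nonzero derivation $d$ of $J$ such that for every $x \in J$, $d(x)$ is either invertible or equal to $0$. *)

(* Defs.v *)
From HB Require Import structures.
From mathcomp Require Import all_boot all_order all_algebra.
Set Implicit Arguments. Unset Strict Implicit. Unset Printing Implicit Defensive.
Import GRing.Theory.
Local Open Scope ring_scope.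

Section Jordan.
Variables (F : fieldType) (J : lmodType F).
Variables (mul : J -> J -> J) (one : J).

Definition assoc3 (a b c : J) : J := mul (mul a b) c - mul a (mul b c).

Definition is_unital_jordan : Prop :=
  [/\ forall (a : F) (x y z : J), mul (a *: x + y) z = a *: mul x z + mul y z,
      forall (a : F) (x y z : J), mul x (a *: y + z) = a *: mul x y + mul x z,
      forall x y : J, mul x y = mul y x,
      forall x y : J, assoc3 (mul x x) y x = 0
    & forall x : J, mul one x = x /\ mul x one = x].

Definition jinvertible (x : J) : Prop :=
  exists y : J, mul x y = one /\ mul (mul x x) y = x.

Definition is_derivation (d : J -> J) : Prop :=
  [/\ forall (a : F) (x y : J), d (a *: x + y) = a *: d x + d y
    & forall x y : J, d (mul x y) = mul (d x) y + mul x (d y)].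

Definition is_derivation_inv_values (d : J -> J) : Prop :=
  [/\ is_derivation d, exists x : J, d x <> 0
    & forall x : J, d x = 0 \/ jinvertible (d x)].

Definition is_ideal (I : J -> Prop) : Prop :=
  [/\ I 0,
      forall (a : F) (x y : J), I x -> I y -> I (a *: x + y)
    & forall x y : J, I y -> I (mul x y)].

End Jordan.

(* Main.v *)
Require Import Defs.
From HB Require Import structures.
From mathcomp Require Import all_boot all_order all_algebra.
Import GRing.Theory.
Local Open Scope ring_scope.


Lemma sum_perm (J : zmodType) (l : seq J) (s1 s2 : seq nat) :
  perm_eq s1 s2 ->
  foldr (fun i acc => nth 0 l i + acc) 0 s1 = foldr (fun i acc => nth 0 l i + acc) 0 s2.
Proof.
move=> h.
have E s : foldr (fun i acc => nth 0 l i + acc) 0 s = \sum_(i <- s) nth 0 l i.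
  by elim: s => [|i s IH]; rewrite ?big_nil ?big_cons //= IH.
by rewrite !E; apply: perm_big.
Qed.

Lemma polar (J : zmodType) (G : J -> J -> J -> J)
  (GDl : forall a a' b c, G (a + a') b c = G a b c + G a' b c)
  (GDm : forall a b b' c, G a (b + b') c = G a b c + G a b' c)
  (GDr : forall a b c c', G a b (c + c') = G a b c + G a b c')
  (GNl : forall a b c, G (- a) b c = - G a b c)
  (GNm : forall a b c, G a (- b) c = - G a b c)
  (GNr : forall a b c, G a b (- c) = - G a b c)
  (GC : forall a b c, G a b c = G b a c)
  (G0 : forall t, G t t t = 0)
  (tf : forall w : J, w + w = 0 -> w = 0) :
  forall a b c, G a b c + G b c a + G c a b = 0.
Proof.
pose M a b := G a a b + G a b a + G b a a.
have E1 a b : G (a + b) (a + b) (a + b) = G a a a + G b b b + (M a b + M b a).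
  rewrite /M !(GDl, GDm, GDr).
  have := @sum_perm _ [:: G a a a; G a a b; G a b a; G a b b; G b a a; G b a b; G b b a; G b b b]
     (iota 0 8) [:: 0; 7; 1; 2; 4; 6; 5; 3]%N erefl => /=.
  by rewrite !addr0 -!addrA.
have E2 a b : M a b + M b a = 0 by have := E1 a b; rewrite !G0 !add0r => <-.
have M0 a b : M a b = 0.
  apply: tf.
  have h1 := E2 b a; have h2 := E2 b (- a).
  have e1 : M b (- a) = - M b a by rewrite /M !(GNl, GNm, GNr) !opprD.
  have e2 : M (- a) b = M a b by rewrite /M !(GNl, GNm, GNr) !opprK.
  rewrite e1 e2 in h2.
  have : (M b a + M a b) + (- M b a + M a b) = 0 by rewrite h1 h2 addr0.
  by rewrite addrACA subrr add0r.
move=> a b c.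
have := M0 (a + c) b.
rewrite /M !(GDl, GDm, GDr).
have := M0 a b; have := M0 c b; rewrite /M.
move=> h1 h2 h3.
have := @sum_perm _ [:: G a a b; G a c b; G c a b; G c c b; G a b a; G a b c; G c b a; G c b c;
   G b a a; G b a c; G b c a; G b c c] (iota 0 12) [:: 0; 4; 8; 3; 7; 11; 1; 2; 5; 6; 9; 10]%N erefl => /=.
rewrite !addr0 => E.
rewrite -!addrA E !addrA h2 add0r -!addrA !addrA h1 add0r in h3.
rewrite (GC a c b) (GC c b a) (GC b a c) in h3.
apply: tf.
have := @sum_perm _ [:: G a b c; G b c a; G c a b] [:: 0; 1; 2; 0; 1; 2]%N [:: 2; 2; 0; 1; 0; 1]%N erefl => /=.
rewrite !addr0 => E'.
rewrite -!addrA E' -h3 -!addrA //.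
Qed.

Theorem lemma3 (F : fieldType)
    (hchar2 : (2%:R : F) != 0) (hchar3 : (3%:R : F) != 0)
    (J : lmodType F) (mul : J -> J -> J) (one : J)
    (HJ : is_unital_jordan mul one)
    (d : J -> J) (Hd : is_derivation_inv_values mul one d)
    (I : J -> Prop) (HI : is_ideal mul I)
    (HIker : forall x : J, I x -> d x = 0) :
  forall x y : J, I x -> I y -> mul x y = 0.
Proof.
move=> x z Ix Iz.
case: HJ => mZl mZr mC mJ mU.
case: Hd => [[dZ dM] [y0 hy0] hinv].
case: HI => I0 IZ IM.
have mDl p q r : mul (p + q) r = mul p r + mul q r.
  by have := mZl 1 p q r; rewrite !scale1r.
have mDr p q r : mul p (q + r) = mul p q + mul p r.
  by have := mZr 1 p q r; rewrite !scale1r.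
have m0l r : mul 0 r = 0.
  have := mDl 0 0 r; rewrite addr0.
  move=> h; apply: (@addrI _ (mul 0 r)); by rewrite addr0 -h.
have m0r r : mul r 0 = 0 by rewrite mC m0l.
have mNl p r : mul (- p) r = - mul p r.
  by have := mZl (-1) p 0 r; rewrite addr0 m0l addr0 !scaleN1r.
have mNr p r : mul r (- p) = - mul r p by rewrite mC mNl mC.
have tf (w : J) : w + w = 0 -> w = 0.
  move=> h.
  have : (2%:R : F) *: w = 0 by rewrite scaler_nat mulr2n.
  by move/eqP; rewrite scaler_eq0 (negbTE hchar2) /= => /eqP.
have Ic p q : I q -> I (mul q p) by move=> Iq; rewrite mC; apply: IM.
case: (hinv y0) => // -[v [huv _]].
set u := d y0 in huv.
have Iu p : I p -> mul p u = 0.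
  move=> Ip.
  have := HIker _ (Ic y0 _ Ip); rewrite dM (HIker _ Ip) m0l add0r //.
pose G a b c := mul (mul (mul a b) u) c - mul (mul a b) (mul u c).
have P := @polar J G.
have /P {P} P : forall a a' b c, G (a + a') b c = G a b c + G a' b c.
  by move=> a a' b c; rewrite /G !(mDl, mDr) opprD addrACA.
have /P {P} P : forall a b b' c, G a (b + b') c = G a b c + G a b' c.
  by move=> a b b' c; rewrite /G !(mDl, mDr) opprD addrACA.
have /P {P} P : forall a b c c', G a b (c + c') = G a b c + G a b c'.
  by move=> a b c c'; rewrite /G !(mDl, mDr) opprD addrACA.
have /P {P} P : forall a b c, G (- a) b c = - G a b c.
  by move=> a b c; rewrite /G !(mNl, mNr) opprB opprK addrC.
have /P {P} P : forall a b c, G a (- b) c = - G a b c.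
  by move=> a b c; rewrite /G !(mNl, mNr) opprB opprK addrC.
have /P {P} P : forall a b c, G a b (- c) = - G a b c.
  by move=> a b c; rewrite /G !(mNl, mNr) opprB opprK addrC.
have /P {P} P : forall a b c, G a b c = G b a c by move=> a b c; rewrite /G (mC a b).
have /P {P} P : forall t, G t t t = 0 by move=> t; exact: mJ.
have := P tf x z v.
have -> : G x z v = - mul x z.
  by rewrite /G Iu ?m0l ?huv ?(proj2 (mU _)) ?add0r //; apply: IM.
have -> : G z v x = 0.
  rewrite /G (Iu (mul z v)) ?m0l; last by apply: Ic.
  by rewrite (mC u x) Iu // m0r subrr.
have -> : G v x z = 0.
  rewrite /G (Iu (mul v x)) ?m0l; last by apply: IM.
  by rewrite (mC u z) Iu // m0r subrr.
by rewrite !addr0 => /eqP; rewrite oppr_eq0 => /eqP.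
Qed.
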